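(* Let $(f_m)_{m\in\mathbb{N}}$, $f_m(z)=\sum_{k=0}^\infty a_k^{(m)}z^k$, be a sequence of functions analytic in the unit disk with real coefficients $a_k^{(m)}\in\mathbb{R}$ for all $k\in\mathbb{N}_0$, $m\in\mathbb{N}$. For $m\in\mathbb{N}$ and $n\in\mathbb{N}_0$ let $s_n^{(m)}=\sum_{k=0}^n a_k^{(m)}$. Suppose that (i) there exist a constant $0<K<\infty$ and real numbers $\alpha_m$, $m\in\mathbb{N}$, such that $\lim_{t\to1^-}f_m(t)=\alpha_m$ and $|\alpha_m|<K$ for all $m$; (ii) $(f_m)$ converges uniformly on $[0,1]$ as $m\to\infty$ (where $f_m$ is extended to $t=1$ by $f_m(1)=\alpha_m$); (iii) there exists a constant $0<L<\infty$ such that $s_n^{(m)}-\alpha_m<L$ for every $m\in\mathbb{N}$, $n\in\mathbb{N}_0$. Then for every $\epsilon>0$ there exists $N(\epsilon)\in\mathbb{N}$ such that \[ \left|\alpha_m-\frac{1}{n+1}\sum_{k=0}^n(n+1-k)a_k^{(m)}\right|=\left|\alpha_m-\frac{1}{n+1}\sum_{k=0}^n s_k^{(m)}\right|<\epsilon \] whenever $m,n>N(\epsilon)$.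
   Context: $\mathbb{N}_0=\mathbb{N}\cup\{0\}$. *)

(* Defs.v *)
From Stdlib Require Import Reals.
From Coquelicot Require Import Coquelicot.
Open Scope R_scope.

Definition psum (a : nat -> R) (n : nat) : R := sum_f_R0 a n.

Definition fext (a : nat -> R) (alpha : R) (t : R) : R :=
  if Rlt_dec t 1 then PSeries a t else alpha.

(* Main.v *)
Require Import Defs.
From Stdlib Require Import Reals.
From Coquelicot Require Import Coquelicot.
From Stdlib Require Import Lra Lia Factorial ZArith.
Open Scope R_scope.

Lemma sum_f_R0_ext_le (f g : nat -> R) n :
  (forall i, (i <= n)%nat -> f i = g i) -> sum_f_R0 f n = sum_f_R0 g n.
Proof.
  induction n; intros H; simpl.
  - apply H; lia.
  - rewrite IHn by (intros; apply H; lia). rewrite H by lia. reflexivity.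
Qed.

Lemma sum_f_R0_scal (c : R) (f : nat -> R) n :
  sum_f_R0 (fun k => c * f k) n = c * sum_f_R0 f n.
Proof. induction n; simpl; [ring|rewrite IHn; ring]. Qed.

Lemma pseries_is_series (a : nat -> R) s :
  Rbar_le 1 (CV_radius a) -> 0 <= s < 1 ->
  is_series (fun k => a k * s ^ k) (PSeries a s).
Proof.
  intros Hr Hs.
  assert (Hl : Rbar_lt (Rabs s) (CV_radius a)).
  { rewrite Rabs_pos_eq by lra. eapply Rbar_lt_le_trans; [|exact Hr]. simpl. lra. }
  pose proof (PSeries_correct a s (CV_radius_inside a s Hl)) as H.
  unfold is_pseries in H.
  eapply is_series_ext; [|exact H]. intros k. simpl.
  rewrite pow_n_pow. unfold scal; simpl. unfold mult; simpl. ring.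
Qed.

Lemma b_series (a : nat -> R) (c s : R) :
  Rbar_le 1 (CV_radius a) -> 0 <= s < 1 ->
  is_series (fun k => (c - psum a k) * s ^ k) ((c - PSeries a s) / (1 - s)).
Proof.
  intros Hr Hs.
  assert (Hl : Rbar_lt (Rabs s) (CV_radius a)).
  { rewrite Rabs_pos_eq by lra. eapply Rbar_lt_le_trans; [|exact Hr]. simpl. lra. }
  assert (Hs1 : Rabs s < 1) by (rewrite Rabs_pos_eq; lra).
  assert (H1 := pseries_is_series a s Hr Hs).
  assert (H2 := is_series_geom s Hs1).
  assert (H3 := is_series_mult _ _ _ _ H1 H2).
  assert (Hab : ex_series (fun n => Rabs (a n * s ^ n))) by (apply CV_disk_inside; exact Hl).
  assert (Hgb : ex_series (fun n => Rabs (s ^ n))).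
  { eapply ex_series_ext; [|apply (ex_series_geom (Rabs s))]. intros n; rewrite RPow_abs; reflexivity.
    rewrite Rabs_Rabsolu; exact Hs1. }
  specialize (H3 Hab Hgb).
  assert (H4 : is_series (fun n => s ^ n * psum a n) (PSeries a s * / (1 - s))).
  { eapply is_series_ext; [|exact H3]. intros n. simpl.
    unfold psum. rewrite <- sum_f_R0_scal. apply sum_f_R0_ext_le. intros i Hi.
    replace n with (i + (n - i))%nat at 2 by lia. rewrite pow_add. ring. }
  assert (H5 := is_series_scal_l c _ _ H2).
  assert (H6 := is_series_scal_l (-1) _ _ H4).
  assert (H7 := is_series_plus _ _ _ _ H5 H6).
  replace ((c - PSeries a s) / (1 - s)) with (plus (scal c (/ (1 - s))) (scal (-1) (PSeries a s * / (1 - s)))).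
  2:{ unfold plus, scal; simpl; unfold mult; simpl. field. lra. }
  eapply is_series_ext; [|exact H7]. intros n. unfold plus, scal; simpl; unfold mult; simpl. ring.
Qed.

Definition hypB (L eta th : R) (b : nat -> R) :=
  (forall k, 0 <= b k) /\ (forall s, 0 <= s < 1 -> ex_series (fun k => b k * s^k)) /\
  (forall s, th <= s < 1 -> Rabs ((1-s) * Series (fun k => b k * s^k) - L) <= eta).

Definition Adm (L : R) (P : R -> R) (I : R) :=
  forall d, 0 < d -> exists eta, 0 < eta /\ forall th, th < 1 -> exists tc, 0 <= tc < 1 /\
    forall b, hypB L eta th b -> forall s, tc <= s < 1 ->
      ex_series (fun k => b k * P (s^k)) /\
      Rabs ((1-s) * Series (fun k => b k * P (s^k)) - L * I) <= d.

Lemma pow01 s k : 0 <= s < 1 -> 0 <= s ^ k <= 1.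
Proof. intros H; split; [apply pow_le; lra|]. rewrite <- (pow1 k). apply pow_incr; lra. Qed.

Lemma Adm_ext L P Q I : (forall y, 0 <= y <= 1 -> P y = Q y) -> Adm L P I -> Adm L Q I.
Proof.
  intros HPQ HA d Hd. destruct (HA d Hd) as [eta [He H]]. exists eta; split; auto.
  intros th Hth. destruct (H th Hth) as [tc [Htc H']]. exists tc; split; auto.
  intros b Hb s Hs. destruct (H' b Hb s Hs) as [Hex Hab].
  assert (E : forall k, b k * P (s^k) = b k * Q (s^k)).
  { intros k; rewrite HPQ; auto. apply pow01; lra. }
  split.
  - eapply ex_series_ext; [exact E|exact Hex].
  - rewrite <- (Series_ext _ _ E). exact Hab.
Qed.

Lemma Adm_plus L P Q I J : Adm L P I -> Adm L Q J -> Adm L (fun y => P y + Q y) (I + J).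
Proof.
  intros HP HQ d Hd.
  destruct (HP (d/2)) as [e1 [He1 H1]]; [lra|].
  destruct (HQ (d/2)) as [e2 [He2 H2]]; [lra|].
  exists (Rmin e1 e2); split; [apply Rmin_pos; auto|].
  intros th Hth. destruct (H1 th Hth) as [t1 [Ht1 H1']]. destruct (H2 th Hth) as [t2 [Ht2 H2']].
  exists (Rmax t1 t2); split; [split; [apply Rmax_case; lra| apply Rmax_case; lra]|].
  intros b [Hb0 [Hb1 Hb2]] s Hs.
  assert (Hb1' : hypB L e1 th b).
  { split; [|split]; auto. intros s' Hs'. eapply Rle_trans; [apply Hb2; auto|apply Rmin_l]. }
  assert (Hb2' : hypB L e2 th b).
  { split; [|split]; auto. intros s' Hs'. eapply Rle_trans; [apply Hb2; auto|apply Rmin_r]. }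
  assert (Hs1 : t1 <= s < 1) by (split; [eapply Rle_trans; [apply Rmax_l|apply Hs]|apply Hs]).
  assert (Hs2 : t2 <= s < 1) by (split; [eapply Rle_trans; [apply Rmax_r|apply Hs]|apply Hs]).
  destruct (H1' b Hb1' s Hs1) as [Ex1 A1]. destruct (H2' b Hb2' s Hs2) as [Ex2 A2].
  assert (E : forall k, b k * (P (s^k) + Q (s^k)) = b k * P (s^k) + b k * Q (s^k)) by (intros; ring).
  split.
  - eapply ex_series_ext; [intros k; symmetry; apply E|]. apply (ex_series_plus _ _ Ex1 Ex2).
  - rewrite (Series_ext _ _ E). rewrite Series_plus by auto.
    replace ((1 - s) * (Series (fun k => b k * P (s ^ k)) + Series (fun k => b k * Q (s ^ k))) - L * (I + J))
      with (((1 - s) * Series (fun k => b k * P (s ^ k)) - L * I) + ((1 - s) * Series (fun k => b k * Q (s ^ k)) - L * J)) by ring.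
    eapply Rle_trans; [apply Rabs_triang|]. lra.
Qed.

Lemma Adm_scal L P I c : Adm L P I -> Adm L (fun y => c * P y) (c * I).
Proof.
  intros HP d Hd.
  destruct (HP (d / (Rabs c + 1))) as [e1 [He1 H1]].
  { apply Rdiv_lt_0_compat; auto. pose proof (Rabs_pos c); lra. }
  exists e1; split; auto. intros th Hth. destruct (H1 th Hth) as [t1 [Ht1 H1']].
  exists t1; split; auto. intros b Hb s Hs. destruct (H1' b Hb s Hs) as [Ex A].
  assert (E : forall k, b k * (c * P (s^k)) = c * (b k * P (s^k))) by (intros; ring).
  split.
  - eapply ex_series_ext; [intros k; symmetry; apply E|]. apply (ex_series_scal_l c _ Ex).
  - rewrite (Series_ext _ _ E). rewrite Series_scal_l.
    replace ((1 - s) * (c * Series (fun k => b k * P (s ^ k))) - L * (c * I))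
      with (c * ((1 - s) * Series (fun k => b k * P (s ^ k)) - L * I)) by ring.
    rewrite Rabs_mult. pose proof (Rabs_pos c).
    apply Rle_trans with (Rabs c * (d / (Rabs c + 1))).
    + apply Rmult_le_compat_l; auto.
    + apply Rle_trans with ((Rabs c + 1) * (d / (Rabs c + 1))).
      * apply Rmult_le_compat_r; [|lra]. apply Rlt_le, Rdiv_lt_0_compat; lra.
      * right; field; lra.
Qed.

Lemma bernoulli n s : 0 <= s <= 1 -> 1 - INR n * (1 - s) <= s ^ n.
Proof.
  intros Hs. induction n.
  - simpl; lra.
  - rewrite ?S_INR. simpl pow. pose proof (pos_INR n).
    assert (s * (1 - INR n * (1 - s)) <= s * s ^ n) by (apply Rmult_le_compat_l; lra).
    assert (0 <= INR n * ((1 - s) * (1 - s))) by (apply Rmult_le_pos; nra).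
    nra.
Qed.

Lemma geom_facts n s : 0 <= s <= 1 ->
  let G := sum_f_R0 (fun i => s ^ i) n in
  1 <= G /\ G <= INR n + 1 /\ INR n + 1 - G <= (INR n + 1) * (INR n + 1) * (1 - s)
  /\ (1 - s) * G = 1 - s ^ (S n).
Proof.
  intros Hs G. subst G.
  assert (P0 : forall k, 0 <= s ^ k <= 1).
  { intros k; split; [apply pow_le; lra|]. rewrite <- (pow1 k). apply pow_incr; lra. }
  split; [|split; [|split]].
  - induction n; [simpl; lra|]. rewrite tech5. pose proof (P0 (S n)). lra.
  - induction n; [simpl; lra|]. rewrite tech5, S_INR. pose proof (P0 (S n)). lra.
  - induction n; [simpl; lra|]. rewrite tech5, S_INR. pose proof (bernoulli (S n) s Hs).
    rewrite S_INR in H. pose proof (pos_INR n).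
    assert (0 <= (INR n + 1) * (1 - s)) by (apply Rmult_le_pos; lra). nra.
  - pose proof (GP_finite s n). replace (n + 1)%nat with (S n) in H by lia. lra.
Qed.

Lemma Adm_pow L a : (1 <= a)%nat -> Adm L (fun y => y ^ a) (/ INR a).
Proof.
  intros Ha d Hd.
  set (A := INR a).
  assert (HA : 1 <= A) by (unfold A; apply (le_INR 1); lia).
  exists (d / 2). split; [lra|]. intros th Hth.
  set (c := Rmin 1 (Rmin ((1 - th) / A) (d / (2 * (Rabs L + 1) * A)))).
  assert (HL : 0 <= Rabs L) by apply Rabs_pos.
  assert (Hc1 : 0 < (1 - th) / A) by (apply Rdiv_lt_0_compat; lra).
  assert (Hc2 : 0 < d / (2 * (Rabs L + 1) * A)).
  { apply Rdiv_lt_0_compat; auto. apply Rmult_lt_0_compat; lra. }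
  assert (Hc : 0 < c) by (unfold c; repeat apply Rmin_pos; lra).
  assert (Hc' : c <= 1) by apply Rmin_l.
  assert (Hcth : c <= (1 - th) / A) by (unfold c; eapply Rle_trans; [apply Rmin_r|apply Rmin_l]).
  assert (Hcd : c <= d / (2 * (Rabs L + 1) * A)) by (unfold c; eapply Rle_trans; [apply Rmin_r|apply Rmin_r]).
  exists (1 - c / 2). split; [lra|].
  intros b [Hb0 [Hb1 Hb2]] s Hs.
  assert (Hs0 : 0 <= s < 1) by lra.
  set (r := s ^ a).
  assert (Hr0 : 0 <= r < 1) by (apply pow_lt_1_compat; [lra|lia]).
  assert (Hbern := bernoulli a s ltac:(lra)). fold r A in Hbern.
  assert (HcA : c * A <= 1 - th).
  { apply Rmult_le_reg_r with (/ A). apply Rinv_0_lt_compat; lra.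
    rewrite Rmult_assoc, Rinv_r, Rmult_1_r by lra. exact Hcth. }
  assert (Hrth : th <= r < 1).
  { split; [|lra]. assert (A * (1 - s) <= A * (c / 2)) by (apply Rmult_le_compat_l; lra). lra. }
  assert (E : forall k, b k * (s ^ k) ^ a = b k * r ^ k).
  { intros k. unfold r. rewrite <- !pow_mult. rewrite Nat.mul_comm. reflexivity. }
  split.
  { eapply ex_series_ext; [intros k; symmetry; apply E|]. apply Hb1; lra. }
  rewrite (Series_ext _ _ E).
  set (X := Series (fun k => b k * r ^ k)).
  specialize (Hb2 r Hrth). fold X in Hb2.
  destruct (geom_facts (a - 1) s ltac:(lra)) as [G1 [G2 [G3 G4]]].
  set (G := sum_f_R0 (fun i => s ^ i) (a - 1)) in *.
  replace (S (a - 1)) with a in G4 by lia. fold r in G4.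
  replace (INR (a - 1) + 1) with A in G2, G3 by (unfold A; rewrite minus_INR by lia; simpl; ring).
  assert (EX : (1 - s) * X = ((1 - r) * X) / G).
  { rewrite <- G4. field. lra. }
  rewrite EX.
  replace (((1 - r) * X) / G - L * / A) with (((1 - r) * X - L) / G + L * ((A - G) / (A * G))).
  2:{ field. lra. }
  eapply Rle_trans; [apply Rabs_triang|].
  rewrite Rabs_mult. unfold Rdiv at 1. rewrite Rabs_mult.
  rewrite (Rabs_pos_eq (/ G)) by (apply Rlt_le, Rinv_0_lt_compat; lra).
  assert (HAG : 0 < A * G) by (apply Rmult_lt_0_compat; lra).
  assert (Hq0 : 0 <= (A - G) / (A * G)) by (apply Rmult_le_pos; [lra|apply Rlt_le, Rinv_0_lt_compat; lra]).
  rewrite (Rabs_pos_eq ((A - G) / (A * G))) by exact Hq0.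
  assert (Hq1 : (A - G) / (A * G) <= A * (c / 2)).
  { apply Rmult_le_reg_r with (A * G); auto.
    unfold Rdiv; rewrite Rmult_assoc, Rinv_l, Rmult_1_r by lra.
    assert (A * A * (1 - s) <= A * (c / 2) * A) by (rewrite (Rmult_comm (A * (c/2))); rewrite Rmult_assoc; apply Rmult_le_compat_l; [lra| nra]).
    assert (A * (c / 2) * A <= A * (c / 2) * (A * G)) by (apply Rmult_le_compat_l; [nra|nra]).
    lra. }
  assert (HiG : / G <= 1) by (rewrite <- Rinv_1; apply Rinv_le_contravar; lra).
  assert (T1 : Rabs ((1 - r) * X - L) * / G <= d / 2).
  { apply Rle_trans with (Rabs ((1 - r) * X - L) * 1); [|lra].
    apply Rmult_le_compat_l; [apply Rabs_pos|exact HiG]. }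
  assert (T2 : Rabs L * ((A - G) / (A * G)) <= d / 2).
  { apply Rle_trans with (Rabs L * (A * (c / 2))); [apply Rmult_le_compat_l; auto|].
    assert (A * c <= d / (2 * (Rabs L + 1))).
    { apply Rle_trans with (A * (d / (2 * (Rabs L + 1) * A))); [apply Rmult_le_compat_l; lra|].
      right. field. lra. }
    assert (Rabs L * (A * c) <= Rabs L * (d / (2 * (Rabs L + 1)))) by (apply Rmult_le_compat_l; auto).
    assert (Rabs L * (d / (2 * (Rabs L + 1))) <= d / 2).
    { assert (Rabs L * (d / (2 * (Rabs L + 1))) = d / 2 - d / (2 * (Rabs L + 1))) by (field; lra).
      assert (0 < d / (2 * (Rabs L + 1))) by (apply Rdiv_lt_0_compat; lra). lra. }
    lra. }
  lra.
Qed.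

Lemma Adm_I L P I J : I = J -> Adm L P I -> Adm L P J.
Proof. intros ->; auto. Qed.

Definition beta (a i : nat) : R := INR (fact (a - 1)) * INR (fact i) / INR (fact (a + i)).

Lemma Adm_beta L i : forall a, (1 <= a)%nat -> Adm L (fun y => y ^ a * (1 - y) ^ i) (beta a i).
Proof.
  induction i; intros a Ha.
  - eapply Adm_ext; [|eapply Adm_I; [|apply (Adm_pow L a Ha)]].
    + intros y _; simpl; ring.
    + unfold beta. destruct a as [|a']; [lia|]. replace (S a' - 1)%nat with a' by lia.
      replace (S a' + 0)%nat with (S a') by lia. rewrite (fact_simpl a'), mult_INR.
      change (fact 0) with 1%nat; simpl (INR 1). pose proof (INR_fact_neq_0 a'). rewrite S_INR. field.
      split; auto. pose proof (pos_INR a'); lra.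
  - assert (H1 := IHi a Ha). assert (H2 := IHi (S a) ltac:(lia)).
    assert (H3 := Adm_plus _ _ _ _ _ H1 (Adm_scal _ _ _ (-1) H2)).
    eapply Adm_ext; [|eapply Adm_I; [|exact H3]].
    + intros y _; simpl; ring.
    + unfold beta. destruct a as [|a']; [lia|]. replace (S a' - 1)%nat with a' by lia.
      replace (S (S a') - 1)%nat with (S a') by lia.
      replace (S a' + S i)%nat with (S (S (a' + i))) by lia.
      replace (S (S a') + i)%nat with (S (S (a' + i))) by lia.
      replace (S a' + i)%nat with (S (a' + i)) by lia.
      rewrite (fact_simpl (S (a' + i))), (fact_simpl (a' + i)), (fact_simpl a'), (fact_simpl i), !mult_INR, !S_INR.
      pose proof (INR_fact_neq_0 a'). pose proof (INR_fact_neq_0 i). pose proof (INR_fact_neq_0 (a' + i)).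
      pose proof (pos_INR a'). pose proof (pos_INR i). pose proof (pos_INR (a' + i)).
      rewrite plus_INR. field. repeat split; lra.
Qed.

Fixpoint harm (M : nat) : R := match M with O => 0 | S M' => harm M' + / INR (S M') end.

Lemma Adm_q L M : Adm L (fun y => 1 - (1 - y) ^ M) (harm M).
Proof.
  induction M.
  - eapply Adm_ext; [|eapply Adm_I; [|apply (Adm_scal L _ _ 0 (Adm_pow L 1 (le_n 1)))]].
    + intros y _; simpl; ring.
    + simpl; ring.
  - assert (H := Adm_plus _ _ _ _ _ IHM (Adm_beta L M 1 (le_n 1))).
    eapply Adm_ext; [|eapply Adm_I; [|exact H]].
    + intros y _; simpl; ring.
    + unfold beta. change (harm (S M)) with (harm M + / INR (S M)). replace (1 - 1)%nat with 0%nat by lia. replace (1 + M)%nat with (S M) by lia.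
      rewrite (fact_simpl M), mult_INR. change (fact 0) with 1%nat. change (INR 1) with 1. pose proof (INR_fact_neq_0 M).
      pose proof (pos_INR M). rewrite S_INR. field. lra.
Qed.

Lemma exp_pow x n : exp x ^ n = exp (INR n * x).
Proof.
  induction n; simpl pow. - simpl; rewrite Rmult_0_l, exp_0; reflexivity.
  - rewrite IHn, S_INR, <- exp_plus. f_equal; ring.
Qed.

Lemma exp_ge x : 1 + x <= exp x.
Proof. apply exp_ineq1_le. Qed.

Lemma exp_neg_le x : 0 <= x -> exp (- x) <= / (1 + x).
Proof.
  intros Hx. rewrite exp_Ropp. apply Rinv_le_contravar; [lra|apply exp_ge].
Qed.

Lemma one_minus_exp_lo x : 0 <= x -> x / (1 + x) <= 1 - exp (- x).
Proof.
  intros Hx. pose proof (exp_neg_le x Hx).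
  assert (x / (1 + x) = 1 - / (1 + x)) by (field; lra). lra.
Qed.

Lemma one_minus_exp_hi x : 1 - exp (- x) <= x.
Proof. pose proof (exp_ge (- x)). lra. Qed.

Lemma harm_lo M : INR M + 1 <= exp (harm M).
Proof.
  induction M.
  - simpl. rewrite exp_0; lra.
  - change (harm (S M)) with (harm M + / INR (S M)). rewrite exp_plus, S_INR.
    pose proof (pos_INR M). pose proof (exp_ge (/ (INR M + 1))).
    assert (0 < / (INR M + 1)) by (apply Rinv_0_lt_compat; lra).
    apply Rle_trans with ((INR M + 1) * (1 + / (INR M + 1))).
    + right. field. lra.
    + apply Rmult_le_compat; lra.
Qed.

Lemma harm_hi M : (1 <= M)%nat -> exp (harm M - 1) <= INR M.
Proof.
  induction M; intros HM; [lia|].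
  destruct M.
  - simpl. replace (0 + / 1 - 1) with 0 by (field). rewrite exp_0; lra.
  - specialize (IHM ltac:(lia)).
    change (harm (S (S M))) with (harm (S M) + / INR (S (S M))).
    replace (harm (S M) + / INR (S (S M)) - 1) with ((harm (S M) - 1) + / INR (S (S M))) by ring.
    rewrite exp_plus. set (m := INR (S M)) in *.
    assert (Hm : 1 <= m) by (unfold m; apply (le_INR 1); lia).
    rewrite (S_INR (S M)). fold m.
    assert (H1 : exp (- / (m + 1)) >= m / (m + 1)).
    { pose proof (exp_ge (- / (m + 1))). assert (m / (m + 1) = 1 + - / (m + 1)) by (field; lra). lra. }
    assert (H2 : exp (/ (m + 1)) <= (m + 1) / m).
    { rewrite <- (Rinv_inv (exp (/ (m + 1)))). rewrite <- exp_Ropp.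
      replace ((m + 1) / m) with (/ (m / (m + 1))) by (field; lra).
      apply Rinv_le_contravar; [apply Rdiv_lt_0_compat; lra|lra]. }
    apply Rle_trans with (m * ((m + 1) / m)).
    + apply Rmult_le_compat; auto; apply Rlt_le, exp_pos.
    + right; field; lra.
Qed.

Lemma nat_above x : exists n : nat, x < INR n.
Proof.
  destruct (archimed (Rabs x)) as [H1 _].
  assert (Hz : (0 <= up (Rabs x))%Z).
  { apply le_IZR. pose proof (Rabs_pos x). lra. }
  exists (Z.to_nat (up (Rabs x))). rewrite INR_IZR_INZ, Z2Nat.id by exact Hz.
  pose proof (Rle_abs x). lra.
Qed.

Lemma partial_le_series c n : (forall k, 0 <= c k) -> ex_series c -> sum_f_R0 c n <= Series c.
Proof.
  intros Hc Hex. rewrite (Series_incr_n c (S n)) by (lia || exact Hex). simpl pred.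
  assert (0 <= Series (fun k => c (S n + k)%nat)).
  { assert (Z0 : Series (fun _ => 0) = 0).
    { rewrite (Series_ext (fun _ => 0) (fun k => 0 * c k)) by (intros; ring).
      rewrite Series_scal_l. ring. }
    rewrite <- Z0. apply Series_le; [intros; split; [lra|apply Hc]|].
    apply (ex_series_incr_n c (S n)) in Hex. exact Hex. }
  lra.
Qed.

Lemma upper_step (b : nat -> R) (q : R -> R) s n e1 :
  (forall k, 0 <= b k) -> (forall k, 0 <= q (s ^ k)) ->
  (forall k, (k <= n)%nat -> 1 - e1 <= q (s ^ k)) ->
  ex_series (fun k => b k * q (s ^ k)) ->
  sum_f_R0 b n * (1 - e1) <= Series (fun k => b k * q (s ^ k)).
Proof.
  intros Hb Hq Hk Hex.
  apply Rle_trans with (sum_f_R0 (fun k => b k * q (s ^ k)) n).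
  - rewrite Rmult_comm, scal_sum. apply sum_Rle. intros k Hkn.
    apply Rmult_le_compat_l; auto.
  - apply partial_le_series; auto. intros k; apply Rmult_le_pos; auto.
Qed.

Lemma lower_step (b : nat -> R) (q : R -> R) s r n C :
  (forall k, 0 <= b k) -> 0 <= C -> 0 <= r ->
  (forall k, 0 <= q (s ^ k) <= 1) ->
  (forall k, (n < k)%nat -> q (s ^ k) <= C * r ^ k) ->
  ex_series (fun k => b k * q (s ^ k)) ->
  ex_series (fun k => b k * r ^ k) ->
  Series (fun k => b k * q (s ^ k)) <= sum_f_R0 b n + C * Series (fun k => b k * r ^ k).
Proof.
  intros Hb HC Hr Hq Hk Hex Hexr.
  rewrite (Series_incr_n _ (S n)) by (lia || exact Hex). simpl pred.
  assert (P1 : sum_f_R0 (fun k => b k * q (s ^ k)) n <= sum_f_R0 b n).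
  { apply sum_Rle. intros k _. rewrite <- (Rmult_1_r (b k)) at 2. apply Rmult_le_compat_l; [apply Hb|apply Hq]. }
  assert (Hexr' := Hexr). apply (ex_series_incr_n _ (S n)) in Hexr'.
  assert (P2 : Series (fun k => b (S n + k)%nat * q (s ^ (S n + k))) <=
               C * Series (fun k => b (S n + k)%nat * r ^ (S n + k))).
  { rewrite <- Series_scal_l. apply Series_le.
    - intros k. split; [apply Rmult_le_pos; [apply Hb|apply Hq]|].
      rewrite <- Rmult_assoc, (Rmult_comm C), Rmult_assoc. apply Rmult_le_compat_l; [apply Hb|].
      apply Hk. lia.
    - apply (ex_series_scal_l C _ Hexr'). }
  assert (P3 : Series (fun k => b (S n + k)%nat * r ^ (S n + k)) <= Series (fun k => b k * r ^ k)).
  { rewrite (Series_incr_n (fun k => b k * r ^ k) (S n)) by (lia || exact Hexr). simpl pred.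
    assert (0 <= sum_f_R0 (fun k => b k * r ^ k) n).
    { apply cond_pos_sum. intros k; apply Rmult_le_pos; [apply Hb|apply pow_le; auto]. }
    lra. }
  assert (C * Series (fun k => b (S n + k)%nat * r ^ (S n + k)) <= C * Series (fun k => b k * r ^ k))
    by (apply Rmult_le_compat_l; auto).
  lra.
Qed.

Lemma q01 M y : 0 <= y <= 1 -> 0 <= 1 - (1 - y) ^ M <= 1.
Proof.
  intros Hy. assert (0 <= (1 - y) ^ M <= 1).
  { split; [apply pow_le; lra|]. apply Rle_trans with (1 ^ M); [apply pow_incr; lra|rewrite pow1; lra]. }
  lra.
Qed.

Lemma exp_kn k n x : (0 < n)%nat -> exp (- (x / INR n)) ^ k = exp (- (x * (INR k / INR n))).
Proof.
  intros Hn. rewrite exp_pow. f_equal. field. apply not_0_INR; lia.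
Qed.

Lemma poly1 L t : 0 <= L -> 0 < t <= 1/4 ->
  (L + t) * (1 + t) <= (L + t * (5 + 16 * L)) * ((1 - t) * (1 - 2 * t)).
Proof. intros. assert (0 <= L * t * t) by (apply Rmult_le_pos; [apply Rmult_le_pos|]; lra).
 assert (0 <= t*t*t) by (apply Rmult_le_pos; [apply Rmult_le_pos|]; lra).
 assert (0 <= L * t * t * t) by (apply Rmult_le_pos; lra).
 assert (L*t*t*t <= L*t*t/4) by nra.
 assert (t*t*t <= t*t/4) by nra.
 nra. Qed.

Lemma tau_facts tau H : 0 < tau <= 1/4 -> 1 < H * tau ^ 3 ->
  64 < H /\ 16 < tau * H /\ 4 < tau * tau * H /\ tau * H <= H / 4.
Proof.
  intros Ht HH. replace (tau ^ 3) with (tau * tau * tau) in HH by ring.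
  assert (H0 : 0 < H).
  { destruct (Rle_lt_dec H 0); auto. assert (0 < tau * tau * tau) by (repeat apply Rmult_lt_0_compat; lra).
    assert (H * (tau * tau * tau) <= 0) by (apply Rmult_le_0_r; lra). lra. }
  assert (A1 : tau * H <= H / 4) by nra.
  assert (A2 : tau * tau * H <= tau * H / 4) by nra.
  assert (A3 : H * (tau * tau * tau) <= tau * tau * H / 4) by nra.
  lra.
Qed.

Lemma tauber L : 0 <= L -> forall eps, 0 < eps -> exists eta, 0 < eta /\
  forall th, th < 1 -> exists N0 : nat, forall b, hypB L eta th b ->
    forall n, (N0 <= n)%nat -> Rabs (sum_f_R0 b n / INR (n + 1) - L) < eps.
Proof.
  intros HL eps Heps.
  set (tau := Rmin (1/4) (eps / (2 * (5 + 16 * L)))).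
  assert (Ht0 : 0 < tau) by (apply Rmin_pos; [lra|apply Rdiv_lt_0_compat; lra]).
  assert (Ht1 : tau <= 1/4) by apply Rmin_l.
  assert (Ht2 : tau * (5 + 16 * L) <= eps / 2).
  { apply Rle_trans with ((eps / (2 * (5 + 16 * L))) * (5 + 16 * L)).
    - apply Rmult_le_compat_r; [lra|apply Rmin_r].
    - right; field; lra. }
  destruct (nat_above (exp (/ tau ^ 3))) as [M HM].
  set (H := harm M).
  assert (HM1 : (1 <= M)%nat).
  { destruct M; [change (INR 0) with 0 in HM; pose proof (exp_pos (/ tau ^ 3)); lra|lia]. }
  assert (HH : / tau ^ 3 < H).
  { apply exp_lt_inv. pose proof (harm_lo M). fold H in H0. lra. }
  assert (HHhi : exp (H - 1) <= INR M) by (apply harm_hi; auto).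
  assert (HHlo : INR M + 1 <= exp H) by apply harm_lo.
  destruct (Adm_q L M tau Ht0) as [etaA [HetaA Hadm]].
  exists (Rmin etaA 1). split; [apply Rmin_pos; lra|].
  intros th Hth. destruct (Hadm th Hth) as [tc [Htc Hadm']].
  set (mu := (1 - tau) * H - 1).
  set (mu' := (1 + tau) * H / (1 - tau)).
  set (th' := Rmax tc th).
  assert (Hth' : th' < 1) by (unfold th'; apply Rmax_case; lra).
  assert (Hth'0 : 0 <= th') by (unfold th'; apply Rle_trans with tc; [lra|apply Rmax_l]).
  destruct (nat_above (mu' / (1 - th') + mu / tau + / tau + tau * mu' + 1)) as [N0 HN0].
  exists N0. intros b Hb n Hn.
  assert (HbA : hypB L etaA th b).
  { destruct Hb as [Hb0 [Hb1 Hb2]]. split; [|split]; auto.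
    intros s Hs. eapply Rle_trans; [apply Hb2; auto|apply Rmin_l]. }
  destruct Hb as [Hb0 [Hb1 Hb2]].
  set (nR := INR n).
  assert (HnN : INR N0 <= nR) by (apply le_INR; auto).
  assert (Htau3 : 1 < H * tau ^ 3).
  { apply Rmult_lt_reg_r with (/ tau ^ 3). apply Rinv_0_lt_compat, pow_lt; lra.
    rewrite Rmult_assoc, Rinv_r, Rmult_1_r, Rmult_1_l by (apply pow_nonzero; lra). exact HH. }
  assert (Htau3' : tau ^ 3 = tau * tau * tau) by ring.
  destruct (tau_facts tau H ltac:(lra) Htau3) as [HH64 [FtH [FttH FtH4]]].
  assert (Hmu : 0 < mu) by (unfold mu; lra).
  assert (Hmu' : 0 < mu') by (unfold mu'; apply Rdiv_lt_0_compat; [apply Rmult_lt_0_compat|]; lra).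
  assert (Hmumu' : mu <= mu').
  { unfold mu, mu'. apply Rle_trans with ((1 + tau) * H); [lra|].
    unfold Rdiv. rewrite <- (Rmult_1_r ((1 + tau) * H)) at 1. apply Rmult_le_compat_l; [apply Rmult_le_pos; lra|].
    rewrite <- Rinv_1. apply Rinv_le_contravar; lra. }
  assert (T1 : 0 <= mu' / (1 - th')) by (apply Rlt_le, Rdiv_lt_0_compat; lra).
  assert (T2 : 0 <= mu / tau) by (apply Rlt_le, Rdiv_lt_0_compat; lra).
  assert (T3 : 0 <= / tau) by (apply Rlt_le, Rinv_0_lt_compat; lra).
  assert (T4 : 0 <= tau * mu') by (apply Rmult_le_pos; lra).
  assert (Htm : tau * mu' < mu') by (apply Rlt_le_trans with (1 * mu'); [apply Rmult_lt_compat_r; lra|lra]).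
  assert (Htm0 : 0 < tau * mu') by (apply Rmult_lt_0_compat; lra).
  assert (Hn1 : mu' / (1 - th') < nR) by lra.
  assert (Hn2 : mu / tau < nR) by lra.
  assert (Hn3 : / tau < nR) by lra.
  assert (Hn4 : tau * mu' < nR) by lra.
  assert (Hn0 : 0 < nR) by lra.
  assert (Hnpos : (0 < n)%nat) by (destruct n; [unfold nR in Hn0; simpl in Hn0; lra|lia]).
  assert (Hmun : mu' / nR < 1 - th').
  { apply Rmult_lt_reg_r with nR; auto. unfold Rdiv. rewrite Rmult_assoc, Rinv_l, Rmult_1_r by lra.
    apply Rmult_lt_reg_r with (/ (1 - th')). apply Rinv_0_lt_compat; lra.
    replace ((1 - th') * nR * / (1 - th')) with nR by (field; lra). exact Hn1. }
  assert (Hmun' : mu / nR <= mu' / nR) by (apply Rmult_le_compat_r; [apply Rlt_le, Rinv_0_lt_compat|]; lra).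
  set (s := exp (- (mu / nR))).
  set (s' := exp (- (mu' / nR))).
  set (r := exp (- (tau * mu' / nR))).
  assert (Hs : th' <= s < 1).
  { split. - pose proof (exp_ge (- (mu / nR))). unfold s. lra.
    - unfold s. rewrite <- exp_0. apply exp_increasing. apply Ropp_lt_gt_0_contravar, Rdiv_lt_0_compat; lra. }
  assert (Hs' : th' <= s' < 1).
  { split. - pose proof (exp_ge (- (mu' / nR))). unfold s'. lra.
    - unfold s'. rewrite <- exp_0. apply exp_increasing. apply Ropp_lt_gt_0_contravar, Rdiv_lt_0_compat; lra. }
  assert (Hr : s' <= r < 1).
  { split.
    - unfold s', r. apply Rlt_le, exp_increasing. apply Ropp_lt_contravar.
      unfold Rdiv. apply Rmult_lt_compat_r; [apply Rinv_0_lt_compat; lra|exact Htm].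
    - unfold r. rewrite <- exp_0. apply exp_increasing. apply Ropp_lt_gt_0_contravar, Rdiv_lt_0_compat; lra. }
  assert (Hthth' : th <= th') by apply Rmax_r.
  assert (Htcth' : tc <= th') by apply Rmax_l.
  assert (ekn : forall k x, exp (- (x / nR)) ^ k = exp (- (x * (INR k / nR)))) by (intros; apply exp_kn; auto).
  set (A := sum_f_R0 b n).
  assert (HA0 : 0 <= A) by (apply cond_pos_sum; auto).
  assert (HnR1 : INR (n + 1) = nR + 1) by (rewrite plus_INR; reflexivity).
  assert (UP : A <= (nR + 1) * (L + tau * (5 + 16 * L))).
  { destruct (Hadm' b HbA s ltac:(lra)) as [ExU AU].
    set (e1 := (1 - exp (- mu)) ^ M).
    assert (Hsk : forall k, 0 <= s ^ k <= 1) by (intros; apply pow01; lra).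
    assert (Hk : forall k, (k <= n)%nat -> 1 - e1 <= 1 - (1 - s ^ k) ^ M).
    { intros k Hk. unfold s. rewrite ekn by auto.
      assert (Hkn : INR k / nR <= 1).
      { apply Rmult_le_reg_r with nR; auto. unfold Rdiv; rewrite Rmult_assoc, Rinv_l, Rmult_1_r, Rmult_1_l by lra.
        apply le_INR; auto. }
      assert (Hk0 : 0 <= INR k / nR) by (apply Rmult_le_pos; [apply pos_INR|apply Rlt_le, Rinv_0_lt_compat; lra]).
      assert (exp (- mu) <= exp (- (mu * (INR k / nR)))).
      { destruct (Req_dec (INR k / nR) 1) as [E|E]; [rewrite E, Rmult_1_r; lra|].
        apply Rlt_le, exp_increasing. assert (INR k / nR < 1) by lra.
        assert (mu * (INR k / nR) < mu * 1) by (apply Rmult_lt_compat_l; lra). lra. }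
      assert ((1 - exp (- (mu * (INR k / nR)))) ^ M <= e1).
      { unfold e1. apply pow_incr. split; [|lra].
        pose proof (pow01 s k ltac:(lra)) as P. unfold s in P. rewrite ekn in P by auto. lra. }
      lra. }
    assert (Hup := upper_step b (fun y => 1 - (1 - y) ^ M) s n e1 Hb0 (fun k => proj1 (q01 M _ (Hsk k))) Hk ExU).
    cbv beta in Hup.
    assert (He1 : e1 <= tau).
    { set (x := exp (- mu)).
      assert (Hx : 0 <= x) by (apply Rlt_le, exp_pos).
      assert (Hx1 : x <= 1) by (unfold x; rewrite <- exp_0; apply Rlt_le, exp_increasing; lra).
      assert (E1 : e1 <= exp (- (INR M * x))).
      { unfold e1. fold x. replace (- (INR M * x)) with (INR M * (- x)) by ring. rewrite <- exp_pow.
        apply pow_incr. pose proof (exp_ge (- x)). lra. }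
      assert (E2 : 1 + tau * H <= INR M * x).
      { apply Rle_trans with (exp (H - 1) * x); [|apply Rmult_le_compat_r; auto].
        unfold x. rewrite <- exp_plus. replace (H - 1 + - mu) with (tau * H) by (unfold mu; ring). apply exp_ge. }
      assert (E3 : exp (- (INR M * x)) <= / (1 + (1 + tau * H))).
      { apply Rle_trans with (exp (- (1 + tau * H))).
        - destruct (Req_dec (1 + tau * H) (INR M * x)) as [E|E]; [rewrite E; lra|].
          apply Rlt_le, exp_increasing; lra.
        - apply exp_neg_le. lra. }
      assert (E4 : / (1 + (1 + tau * H)) <= tau).
      { apply Rmult_le_reg_r with (1 + (1 + tau * H)); [lra|]. rewrite Rinv_l by lra. lra. }
      lra. }
    assert (H1s : mu <= (1 - s) * (nR + mu)).
    { pose proof (one_minus_exp_lo (mu / nR) ltac:(apply Rlt_le, Rdiv_lt_0_compat; lra)) as P. fold s in P.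
      replace (mu / nR / (1 + mu / nR)) with (mu / (nR + mu)) in P by (field; lra).
      apply Rmult_le_reg_r with (/ (nR + mu)); [apply Rinv_0_lt_compat; lra|].
      replace ((1 - s) * (nR + mu) * / (nR + mu)) with (1 - s) by (field; lra). exact P. }
    assert (S1 : (1 - s) * Series (fun k => b k * (1 - (1 - s ^ k) ^ M)) <= L * H + tau).
    { cbv beta in AU. fold H in AU. match type of AU with Rabs ?z <= _ => pose proof (Rle_abs z) end; lra. }
    assert (S2 : A * (1 - tau) * mu <= (L * H + tau) * (nR + mu)).
    { apply Rle_trans with (A * (1 - e1) * ((1 - s) * (nR + mu))).
      - apply Rmult_le_compat; [apply Rmult_le_pos; lra|lra| |exact H1s]. apply Rmult_le_compat_l; lra.
      - assert (0 <= 1 - s) by lra.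
        assert (A * (1 - e1) * (1 - s) <= L * H + tau).
        { apply Rle_trans with ((1 - s) * Series (fun k => b k * (1 - (1 - s ^ k) ^ M))); [|exact S1].
          rewrite Rmult_comm. apply Rmult_le_compat_l; auto. }
        assert (0 < nR + mu) by lra.
        replace (A * (1 - e1) * ((1 - s) * (nR + mu))) with ((A * (1 - e1) * (1 - s)) * (nR + mu)) by ring.
        apply Rmult_le_compat_r; lra. }
    assert (S3 : (1 - 2 * tau) * H <= mu) by (unfold mu; lra).
    assert (S4 : nR + mu <= (1 + tau) * (nR + 1)).
    { assert (mu <= tau * nR).
      { apply Rmult_le_reg_r with (/ tau); [apply Rinv_0_lt_compat; lra|].
        replace (tau * nR * / tau) with nR by (field; lra). lra. }
      lra. }
    assert (S5 : A * (1 - tau) * (1 - 2 * tau) * H <= (L + tau) * H * (1 + tau) * (nR + 1)).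
    { apply Rle_trans with (A * (1 - tau) * mu).
      - rewrite Rmult_assoc. apply Rmult_le_compat_l; [apply Rmult_le_pos; lra|exact S3].
      - apply Rle_trans with ((L * H + tau) * (nR + mu)); auto.
        apply Rle_trans with ((L * H + tau) * ((1 + tau) * (nR + 1))).
        + apply Rmult_le_compat_l; [|exact S4]. assert (0 <= L * H) by (apply Rmult_le_pos; lra). lra.
        + replace ((L + tau) * H * (1 + tau) * (nR + 1)) with ((L * H + tau * H) * ((1 + tau) * (nR + 1))) by ring.
          apply Rmult_le_compat_r; [apply Rmult_le_pos; lra|].
          assert (tau <= tau * H) by (rewrite <- (Rmult_1_r tau) at 1; apply Rmult_le_compat_l; lra). lra. }
    assert (S6 : A * (1 - tau) * (1 - 2 * tau) <= (L + tau) * (1 + tau) * (nR + 1)).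
    { apply Rmult_le_reg_r with H; [lra|].
      replace ((L + tau) * (1 + tau) * (nR + 1) * H) with ((L + tau) * H * (1 + tau) * (nR + 1)) by ring. exact S5. }
    assert (S7 := poly1 L tau HL ltac:(lra)).
    assert (W : 0 < (1 - tau) * (1 - 2 * tau)) by (apply Rmult_lt_0_compat; lra).
    assert (S8 : (L + tau) * (1 + tau) * (nR + 1) <= (L + tau * (5 + 16 * L)) * ((1 - tau) * (1 - 2 * tau)) * (nR + 1))
      by (apply Rmult_le_compat_r; lra).
    apply Rmult_le_reg_r with ((1 - tau) * (1 - 2 * tau)); auto.
    replace (A * ((1 - tau) * (1 - 2 * tau))) with (A * (1 - tau) * (1 - 2 * tau)) by ring.
    replace ((nR + 1) * (L + tau * (5 + 16 * L)) * ((1 - tau) * (1 - 2 * tau)))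
      with ((L + tau * (5 + 16 * L)) * ((1 - tau) * (1 - 2 * tau)) * (nR + 1)) by ring.
    lra. }
  assert (LOW : (nR + 1) * (L - tau * (3 + 5 * L)) <= A).
  { destruct (Rle_lt_dec (L - tau * (3 + 5 * L)) 0) as [Hneg|Hpos].
    { assert ((nR + 1) * (L - tau * (3 + 5 * L)) <= 0) by (apply Rmult_le_0_l; lra). lra. }
    destruct (Hadm' b HbA s' ltac:(lra)) as [ExL AL].
    cbv beta in AL. fold H in AL.
    set (Sq := Series (fun k => b k * (1 - (1 - s' ^ k) ^ M))) in *.
    assert (S1 : L * H - tau <= (1 - s') * Sq).
    { match type of AL with Rabs ?z <= _ => assert (- z <= Rabs z) by (rewrite <- Rabs_Ropp; apply Rle_abs) end. lra. }
    set (C := INR M * exp (- ((1 - tau) * mu'))).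
    assert (HC0 : 0 <= C) by (apply Rmult_le_pos; [apply pos_INR|apply Rlt_le, exp_pos]).
    assert (HCb : C * (1 + tau * H) <= 1).
    { assert (E : (1 - tau) * mu' = (1 + tau) * H) by (unfold mu'; field; lra).
      assert (C <= exp (- (tau * H))).
      { unfold C. rewrite E. apply Rle_trans with (exp H * exp (- ((1 + tau) * H))).
        - apply Rmult_le_compat_r; [apply Rlt_le, exp_pos|lra].
        - rewrite <- exp_plus. right. f_equal. ring. }
      assert (exp (- (tau * H)) <= / (1 + tau * H)) by (apply exp_neg_le; lra).
      assert (0 < 1 + tau * H) by lra.
      apply Rle_trans with (/ (1 + tau * H) * (1 + tau * H)).
      - apply Rmult_le_compat_r; lra.
      - rewrite Rinv_l; lra. }
    assert (Hqk : forall k, 0 <= 1 - (1 - s' ^ k) ^ M <= 1) by (intros; apply q01, pow01; lra).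
    assert (Hk' : forall k, (n < k)%nat -> 1 - (1 - s' ^ k) ^ M <= C * r ^ k).
    { intros k Hk.
      assert (Hkn : 1 <= INR k / nR).
      { apply Rmult_le_reg_r with nR; auto. unfold Rdiv; rewrite Rmult_assoc, Rinv_l, Rmult_1_r, Rmult_1_l by lra.
        apply le_INR; lia. }
      assert (B1 : 1 - (1 - s' ^ k) ^ M <= INR M * s' ^ k).
      { pose proof (bernoulli M (1 - s' ^ k)) as Bn. pose proof (pow01 s' k ltac:(lra)). 
        specialize (Bn ltac:(lra)). lra. }
      assert (B2 : s' ^ k <= exp (- ((1 - tau) * mu')) * r ^ k).
      { unfold s', r. rewrite !ekn. rewrite <- exp_plus.
        destruct (Req_dec (INR k / nR) 1) as [E|E].
        - rewrite E. right. f_equal. ring.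
        - apply Rlt_le, exp_increasing.
          assert (0 < (1 - tau) * mu') by (apply Rmult_lt_0_compat; lra).
          assert (1 < INR k / nR) by lra.
          assert ((1 - tau) * mu' * 1 < (1 - tau) * mu' * (INR k / nR)) by (apply Rmult_lt_compat_l; lra).
          lra. }
      apply Rle_trans with (INR M * s' ^ k); auto.
      unfold C. rewrite Rmult_assoc. apply Rmult_le_compat_l; [apply pos_INR|auto]. }
    assert (Hr0 : 0 <= r) by (apply Rlt_le, exp_pos).
    assert (Exr : ex_series (fun k => b k * r ^ k)) by (apply Hb1; lra).
    assert (LS := lower_step b (fun y => 1 - (1 - y) ^ M) s' r n C Hb0 HC0 Hr0 Hqk Hk' ExL Exr).
    cbv beta in LS. fold Sq A in LS.
    set (Sr := Series (fun k => b k * r ^ k)) in *.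
    assert (HSr0 : 0 <= Sr).
    { apply Rle_trans with (sum_f_R0 (fun k => b k * r ^ k) 0).
      - simpl. rewrite Rmult_1_r. auto.
      - apply partial_le_series; auto. intros; apply Rmult_le_pos; [auto|apply pow_le; auto]. }
    assert (HSr1 : (1 - r) * Sr <= L + 1).
    { pose proof (Hb2 r ltac:(lra)) as Q. fold Sr in Q.
      pose proof (Rle_abs ((1 - r) * Sr - L)). pose proof (Rmin_r etaA 1). lra. }
    assert (Hs'hi : 1 - s' <= mu' / nR) by apply one_minus_exp_hi.
    assert (Hrlo : tau * mu' / nR / (1 + tau * mu' / nR) <= 1 - r)
      by (apply one_minus_exp_lo; apply Rlt_le, Rdiv_lt_0_compat; lra).
    assert (Hx1 : tau * mu' / nR < 1).
    { apply Rmult_lt_reg_r with nR; auto. unfold Rdiv; rewrite Rmult_assoc, Rinv_l, Rmult_1_r by lra. lra. }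
    assert (Hx0 : 0 < tau * mu' / nR) by (apply Rdiv_lt_0_compat; lra).
    assert (Rat : tau * (1 - s') <= 2 * (1 - r)).
    { assert (tau * mu' / nR / 2 <= tau * mu' / nR / (1 + tau * mu' / nR)).
      { unfold Rdiv at 2 3. apply Rmult_le_compat_l; [lra|]. apply Rinv_le_contravar; lra. }
      assert (tau * (1 - s') <= tau * (mu' / nR)) by (apply Rmult_le_compat_l; lra).
      replace (tau * (mu' / nR)) with (tau * mu' / nR) in H1 by (unfold Rdiv; ring). lra. }
    set (W := (1 - s') * Sr).
    assert (HW0 : 0 <= W) by (apply Rmult_le_pos; lra).
    assert (HW : tau * W <= 2 * (L + 1)).
    { unfold W. rewrite <- Rmult_assoc. apply Rle_trans with (2 * (1 - r) * Sr).
      - apply Rmult_le_compat_r; auto.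
      - rewrite Rmult_assoc. apply Rmult_le_compat_l; lra. }
    assert (HCW : C * W <= 2 * (L + 1) * tau * H).
    { assert (Q1 : tau * (1 + tau * H) * (C * W) <= 2 * (L + 1)).
      { replace (tau * (1 + tau * H) * (C * W)) with ((C * (1 + tau * H)) * (tau * W)) by ring.
        apply Rle_trans with (1 * (tau * W)); [apply Rmult_le_compat_r; [apply Rmult_le_pos; lra|exact HCb]|lra]. }
      assert (Q2 : 0 <= C * W) by (apply Rmult_le_pos; auto).
      assert (Q3 : tau * tau * H * (C * W) <= 2 * (L + 1)).
      { apply Rle_trans with (tau * (1 + tau * H) * (C * W)); auto. apply Rmult_le_compat_r; auto. lra. }
      assert (Q4 : 1 <= tau * tau * H * (tau * H)).
      { apply Rle_trans with (1 * 1); [lra|]. apply Rmult_le_compat; lra. }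
      assert (Q6 : 0 <= tau * H) by (apply Rmult_le_pos; lra).
      apply Rle_trans with ((C * W) * (tau * tau * H * (tau * H))).
      { rewrite <- (Rmult_1_r (C * W)) at 1. apply Rmult_le_compat_l; auto. }
      replace ((C * W) * (tau * tau * H * (tau * H))) with ((tau * tau * H * (C * W)) * (tau * H)) by ring.
      replace (2 * (L + 1) * tau * H) with (2 * (L + 1) * (tau * H)) by ring.
      apply Rmult_le_compat_r; auto. }
    assert (S2 : L * H - tau - C * W <= A * (mu' / nR)).
    { apply Rle_trans with ((1 - s') * A).
      - assert ((1 - s') * Sq <= (1 - s') * (A + C * Sr)) by (apply Rmult_le_compat_l; lra).
        unfold W in *. lra.
      - rewrite Rmult_comm. apply Rmult_le_compat_l; auto. }
    set (L' := L - tau * (3 + 2 * L)).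
    assert (S3 : H * L' <= A * (mu' / nR)).
    { assert (tau <= tau * H) by (rewrite <- (Rmult_1_r tau) at 1; apply Rmult_le_compat_l; lra). unfold L'. lra. }
    assert (S4 : (1 - tau) * nR * L' <= A * (1 + tau)).
    { unfold mu' in S3.
      replace (A * ((1 + tau) * H / (1 - tau) / nR)) with (H * (A * (1 + tau) / ((1 - tau) * nR))) in S3 by (field; lra).
      apply Rmult_le_reg_l in S3; [|lra].
      apply Rmult_le_reg_r with (/ ((1 - tau) * nR)). apply Rinv_0_lt_compat, Rmult_lt_0_compat; lra.
      replace ((1 - tau) * nR * L' * / ((1 - tau) * nR)) with L' by (field; lra). exact S3. }
    assert (Htn : 1 < tau * nR).
    { apply Rmult_lt_compat_l with (r := tau) in Hn3; auto. rewrite Rinv_r in Hn3; lra. }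
    assert (S5 : (1 - tau) * (nR + 1) <= nR) by lra.
    assert (0 <= tau * L) by (apply Rmult_le_pos; lra).
    assert (HL'0 : 0 < L') by (unfold L'; lra).
    assert (S6 : (1 - tau) * (1 - tau) * (nR + 1) * L' <= A * (1 + tau)).
    { apply Rle_trans with ((1 - tau) * nR * L'); auto.
      replace ((1 - tau) * (1 - tau) * (nR + 1) * L') with ((1 - tau) * ((1 - tau) * (nR + 1)) * L') by ring.
      apply Rmult_le_compat_r; [lra|]. apply Rmult_le_compat_l; lra. }
    assert (S7 : (1 - 3 * tau) * (1 + tau) <= (1 - tau) * (1 - tau)) by (pose proof (Rle_0_sqr tau); unfold Rsqr in *; lra).
    assert (S8 : (1 - 3 * tau) * (nR + 1) * L' <= A).
    { apply Rmult_le_reg_r with (1 + tau); [lra|].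
      apply Rle_trans with ((1 - tau) * (1 - tau) * (nR + 1) * L'); auto.
      replace ((1 - 3 * tau) * (nR + 1) * L' * (1 + tau)) with (((1 - 3 * tau) * (1 + tau)) * ((nR + 1) * L')) by ring.
      replace ((1 - tau) * (1 - tau) * (nR + 1) * L') with (((1 - tau) * (1 - tau)) * ((nR + 1) * L')) by ring.
      apply Rmult_le_compat_r; [apply Rmult_le_pos; lra|auto]. }
    assert (S9 : L - tau * (3 + 5 * L) <= (1 - 3 * tau) * L').
    { assert (0 <= tau * tau * (3 + 2 * L)) by (apply Rmult_le_pos; [apply Rmult_le_pos|]; lra).
      unfold L'. lra. }
    apply Rle_trans with ((1 - 3 * tau) * (nR + 1) * L'); auto.
    replace ((1 - 3 * tau) * (nR + 1) * L') with ((nR + 1) * ((1 - 3 * tau) * L')) by ring.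
    apply Rmult_le_compat_l; lra. }
  rewrite HnR1. fold A.
  assert (Hd : 0 < nR + 1) by lra.
  assert (UB : A / (nR + 1) <= L + tau * (5 + 16 * L)).
  { apply Rmult_le_reg_r with (nR + 1); auto. unfold Rdiv. rewrite Rmult_assoc, Rinv_l, Rmult_1_r by lra. lra. }
  assert (LB : L - tau * (3 + 5 * L) <= A / (nR + 1)).
  { apply Rmult_le_reg_r with (nR + 1); auto. unfold Rdiv. rewrite Rmult_assoc, Rinv_l, Rmult_1_r by lra. lra. }
  assert (tau * (3 + 5 * L) <= tau * (5 + 16 * L)) by (apply Rmult_le_compat_l; lra).
  apply Rabs_def1; lra.
Qed.

Lemma lim_left (f : R -> R) (l e : R) : 0 < e ->
  filterlim f (at_left 1) (locally l) -> exists th, 0 <= th < 1 /\ forall s, th <= s < 1 -> Rabs (f s - l) < e.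
Proof.
  intros He Hf. apply filterlim_locally with (eps := mkposreal e He) in Hf.
  destruct Hf as [d Hd]. exists (Rmax 0 (1 - d / 2)).
  pose proof (cond_pos d). split; [split; [apply Rmax_l| apply Rmax_case; lra]|].
  intros s Hs. assert (Hs1 : 1 - d / 2 <= s) by (eapply Rle_trans; [apply Rmax_r|apply Hs]).
  specialize (Hd s). simpl in Hd. unfold ball in Hd; simpl in Hd. unfold AbsRing_ball, abs, minus, plus, opp in Hd; simpl in Hd.
  apply Hd; [|lra]. rewrite Rabs_left1; lra.
Qed.

Lemma cesaro_eq (x : nat -> R) n :
  sum_f_R0 (fun k => INR (n + 1 - k) * x k) n = sum_f_R0 (fun k => psum x k) n.
Proof.
  induction n.
  - simpl. unfold psum; simpl. ring.
  - rewrite (tech5 (fun k => psum x k)), <- IHn, (tech5 (fun k => INR (S n + 1 - k) * x k)).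
    replace (INR (S n + 1 - S n)) with 1 by (replace (S n + 1 - S n)%nat with 1%nat by lia; reflexivity).
    rewrite (sum_f_R0_ext_le (fun k => INR (S n + 1 - k) * x k) (fun k => INR (n + 1 - k) * x k + x k)).
    2:{ intros i Hi. replace (S n + 1 - i)%nat with (S (n + 1 - i)) by lia. rewrite S_INR. ring. }
    rewrite sum_plus. unfold psum. rewrite (tech5 x n). ring.
Qed.

Theorem lemma1 (a : nat -> nat -> R) (alpha : nat -> R) (K L : R) :
  (forall m, (0 < m)%nat -> Rbar_le (Finite 1) (CV_radius (a m))) ->
  0 < K ->
  (forall m, (0 < m)%nat ->
     filterlim (PSeries (a m)) (at_left 1) (locally (alpha m))) ->
  (forall m, (0 < m)%nat -> Rabs (alpha m) < K) ->
  (exists g : R -> R, forall eps, 0 < eps ->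
     exists M : nat, forall m, (M <= m)%nat -> (0 < m)%nat ->
       forall t, 0 <= t <= 1 -> Rabs (fext (a m) (alpha m) t - g t) < eps) ->
  0 < L ->
  (forall m n, (0 < m)%nat -> psum (a m) n - alpha m < L) ->
  forall eps, 0 < eps ->
    exists N : nat, (0 < N)%nat /\
      forall m n, (N < m)%nat -> (N < n)%nat ->
        Rabs (alpha m - / INR (n + 1) *
                sum_f_R0 (fun k => INR (n + 1 - k) * a m k) n)
        = Rabs (alpha m - / INR (n + 1) * sum_f_R0 (fun k => psum (a m) k) n)
        /\
        Rabs (alpha m - / INR (n + 1) *
                sum_f_R0 (fun k => INR (n + 1 - k) * a m k) n) < eps.
Proof.
  intros Hrad _ Hlim _ [g Hg] HL Hiii eps Heps.
  destruct (tauber L ltac:(lra) eps Heps) as [eta [Heta Htau]].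
  (* equicontinuity at 1 *)
  destruct (Hg (eta / 5) ltac:(lra)) as [M1 HM1].
  set (m1 := Nat.max M1 1).
  assert (Hm1a : (M1 <= m1)%nat) by lia. assert (Hm1b : (0 < m1)%nat) by lia.
  destruct (lim_left _ _ (eta / 5) ltac:(lra) (Hlim m1 Hm1b)) as [th [Hth Hth']].
  destruct (Htau th ltac:(lra)) as [N0 HN0].
  exists (Nat.max (Nat.max m1 N0) 1). split; [lia|].
  intros m n Hm Hn.
  assert (Hm0 : (0 < m)%nat) by lia.
  rewrite cesaro_eq. split; [reflexivity|].
  set (b := fun k => (L + alpha m) - psum (a m) k).
  assert (Hfext1 : forall c x, fext c x 1 = x).
  { intros c x. unfold fext. destruct (Rlt_dec 1 1); [lra|reflexivity]. }
  assert (Hfexts : forall c x s, s < 1 -> fext c x s = PSeries c s).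
  { intros c x s Hs. unfold fext. destruct (Rlt_dec s 1); [reflexivity|lra]. }
  assert (Heq : forall s, th <= s < 1 -> Rabs (PSeries (a m) s - alpha m) <= eta).
  { intros s Hs.
    assert (A1 := HM1 m ltac:(lia) Hm0 s ltac:(lra)).
    assert (A2 := HM1 m1 Hm1a Hm1b s ltac:(lra)).
    assert (A3 := HM1 m ltac:(lia) Hm0 1 ltac:(lra)).
    assert (A4 := HM1 m1 Hm1a Hm1b 1 ltac:(lra)).
    assert (A5 := Hth' s Hs).
    rewrite Hfexts in A1, A2 by lra. rewrite Hfext1 in A3, A4.
    set (u1 := PSeries (a m) s - g s) in *. set (u2 := PSeries (a m1) s - g s) in *.
    set (u3 := alpha m - g 1) in *. set (u4 := alpha m1 - g 1) in *.
    set (u5 := PSeries (a m1) s - alpha m1) in *.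
    replace (PSeries (a m) s - alpha m) with (u1 - u2 + u5 + u4 - u3) by (unfold u1, u2, u3, u4, u5; ring).
    apply Rabs_def2 in A1. apply Rabs_def2 in A2. apply Rabs_def2 in A3. apply Rabs_def2 in A4.
    apply Rabs_def2 in A5. apply Rabs_le. lra. }
  assert (Hb : hypB L eta th b).
  { split; [|split].
    - intros k. unfold b. pose proof (Hiii m k Hm0). lra.
    - intros s Hs. eexists. apply (b_series (a m) (L + alpha m) s (Hrad m Hm0) Hs).
    - intros s Hs. unfold b.
      rewrite (is_series_unique _ _ (b_series (a m) (L + alpha m) s (Hrad m Hm0) ltac:(lra))).
      replace ((1 - s) * ((L + alpha m - PSeries (a m) s) / (1 - s)) - L) with (- (PSeries (a m) s - alpha m))
        by (field; lra).
      rewrite Rabs_Ropp. apply Heq; auto. }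
  assert (HT := HN0 b Hb n ltac:(lia)).
  assert (Hsb : sum_f_R0 b n = INR (n + 1) * (L + alpha m) - sum_f_R0 (fun k => psum (a m) k) n).
  { unfold b. rewrite minus_sum, sum_cte. replace (S n) with (n + 1)%nat by lia. rewrite Rmult_comm. reflexivity. }
  rewrite Hsb in HT.
  assert (Hn1 : 0 < INR (n + 1)) by (apply lt_0_INR; lia).
  replace (alpha m - / INR (n + 1) * sum_f_R0 (fun k => psum (a m) k) n)
    with ((INR (n + 1) * (L + alpha m) - sum_f_R0 (fun k => psum (a m) k) n) / INR (n + 1) - L)
    by (field; lra).
  exact HT.
Qed.
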